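(* For each $n$, the set $\{\mathfrak{L}_a : a \text{ a weak composition of length } n\}$ is a basis of the polynomial ring $\mathbb{Z}[x_1,\ldots,x_n]$.
   Context: A weak composition of length $n$ is a sequence $a=(a_1,\ldots,a_n)$ of nonnegative integers; $x^a=x_1^{a_1}\cdots x_n^{a_n}$. A local move replaces consecutive entries $(0,k)$ at positions $p,p+1$ by $(i,j)$ with $i+j=k$, $i,j\ge0$. A fixed slide of $a$ is a weak composition obtained from $a$ by a (possibly empty) sequence of local moves in which $j>0$ is required whenever $a_{p+1}\ne 0$. The fundamental particle is $\mathfrak{L}_a=\sum x^b$ over the set of fixed slides $b$ of $a$. *)

(* Defs.v *)
From HB Require Import structures.
From mathcomp Require Import all_boot all_order all_algebra.
From mathcomp Require Import mpoly.
From Stdlib Require Import ClassicalEpsilon.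
Set Implicit Arguments. Unset Strict Implicit. Unset Printing Implicit Defensive.
Import GRing.Theory.
Local Open Scope ring_scope.

(* Weak compositions of length n are the monomials 'X_{1..n} (i.e. n-tuples
   of nat, position i : 'I_n corresponding to x_(i+1)); x^a is 'X_[a]. *)

Definition local_move (n : nat) (a b c : 'X_{1..n}) : Prop :=
  exists (p q : 'I_n),
    [/\ val q = (val p).+1, b p = 0%N, (c p + c q)%N = b q,
        (a q != 0%N -> (0 < c q)%N)
      & forall r : 'I_n, r != p -> r != q -> c r = b r].

Inductive fixed_slide (n : nat) (a : 'X_{1..n}) : 'X_{1..n} -> Prop :=
  | fs_refl : fixed_slide a a
  | fs_step (b c : 'X_{1..n}) :
      fixed_slide a b -> local_move a b c -> fixed_slide a c.

(* Fundamental particle: sum of x^b over fixed slides b of a.  Local moves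
   preserve the degree, so every fixed slide has degree mdeg a and the sum
   may range over monomials of degree < (mdeg a).+1. *)
Definition particle (n : nat) (a : 'X_{1..n}) : {mpoly int[n]} :=
  \sum_(b : 'X_{1..n < (mdeg a).+1})
     (if excluded_middle_informative (fixed_slide a (val b))
      then 'X_[val b] else 0).

(* Main.v *)
Require Import Defs.
From HB Require Import structures.
From mathcomp Require Import all_boot all_order all_algebra.
From mathcomp Require Import mpoly.
From mathcomp Require Import zify.
From Stdlib Require Import ClassicalEpsilon.
Import GRing.Theory.
Local Open Scope ring_scope.
Set Implicit Arguments. Unset Strict Implicit.

Definition phi {n : nat} (b : 'X_{1..n}) : nat := (\sum_(i : 'I_n) (fun i : 'I_n => n - i) i * b i)%N.

Lemma sum_two (n : nat) (p q : 'I_n) (w : 'I_n -> nat) (b c : 'X_{1..n}) :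
  p != q -> b p = 0%N -> (c p + c q)%N = b q ->
  (forall r : 'I_n, r != p -> r != q -> c r = b r) ->
  (\sum_i w i * c i + w q * c p = \sum_i w i * b i + w p * c p)%N.
Proof.
move=> npq bp cpq cr.
rewrite (bigD1 p) // (bigD1 q) 1?eq_sym //= [in RHS](bigD1 p) // (bigD1 q) 1?eq_sym //=.
rewrite (eq_bigr (fun i => w i * b i)%N); last first.
  by move=> i /andP [ip iq]; rewrite cr.
rewrite bp -cpq; lia.
Qed.

Lemma local_move_props n (a b c : 'X_{1..n}) : local_move a b c ->
  mdeg c = mdeg b /\ (c = b \/ (phi b < phi c)%N).
Proof.
case=> p [q] [hq bp cpq _ cr].
have npq : p != q by apply/eqP => E; move: hq; rewrite E; lia.
split.
  have := @sum_two _ _ _ (fun _ => 1%N) _ _ npq bp cpq cr.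
  rewrite !mdegE. rewrite !(eq_bigr _ (fun i _ => mul1n _)). lia.
have H : (phi c + (n - q) * c p = phi b + (n - p) * c p)%N.
  exact (@sum_two _ _ _ (fun i : 'I_n => n - i)%N _ _ npq bp cpq cr).
have hp : (n - p = (n - q).+1)%N by have := ltn_ord q; move: hq => /= hq; lia.
rewrite hp in H.
case: (posnP (c p)) => cp0.
  left; apply/mnmP => i.
  case: (eqVneq i p) => [->|ip]; first by rewrite cp0 bp.
  case: (eqVneq i q) => [->|iq]; first by rewrite -cpq cp0.
  by rewrite cr.
right; move: cp0; lia.
Qed.

Lemma fixed_slide_props n (a b : 'X_{1..n}) : fixed_slide a b ->
  mdeg b = mdeg a /\ (b = a \/ (phi a < phi b)%N).
Proof.
elim=> [|b' c _ [IHd IHp] lm]; first by split; [|left].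
have [d [E|lt]] := local_move_props lm.
  by rewrite E; split.
split; first by rewrite d.
right; case: IHp => [E|lt']; first by rewrite -E.
lia.
Qed.

Lemma ifEM_T (P : Prop) (T : Type) (x y : T) :
  P -> (if excluded_middle_informative P then x else y) = x.
Proof. by case: (excluded_middle_informative P). Qed.

Lemma ifEM_F (P : Prop) (T : Type) (x y : T) :
  ~ P -> (if excluded_middle_informative P then x else y) = y.
Proof. by case: (excluded_middle_informative P). Qed.

Lemma coef_particle_fs n (a m : 'X_{1..n}) : fixed_slide a m -> (particle a)@_m = 1.
Proof.
move=> fs; have [d _] := fixed_slide_props fs.
have lt : (mdeg m < (mdeg a).+1)%N by rewrite d.
rewrite /particle raddf_sum (bigD1 (Sub m lt : 'X_{1..n < (mdeg a).+1})) //=.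
rewrite ifEM_T // mcoeffX eqxx.
rewrite big1 ?addr0 // => b nb.
have [f2|f2] := excluded_middle_informative (fixed_slide a (val b)); last by rewrite ifEM_F // mcoeff0.
rewrite ifEM_T //.
rewrite mcoeffX; case: eqP => // E; exfalso; move/eqP: nb; apply.
by apply: val_inj; rewrite /= E.
Qed.

Lemma coef_particle_nfs n (a m : 'X_{1..n}) : ~ fixed_slide a m -> (particle a)@_m = 0.
Proof.
move=> nfs; rewrite /particle raddf_sum big1 // => b _.
have [f|f] := excluded_middle_informative (fixed_slide a (val b)); last by rewrite ifEM_F // raddf0.
rewrite ifEM_T //.
by rewrite /= mcoeffX; case: eqP => // E; by exfalso; apply: nfs; rewrite -E; exact: f.
Qed.

Lemma indep n (s : seq 'X_{1..n}) (c : 'X_{1..n} -> int) :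
  uniq s -> \sum_(a <- s) c a *: particle a = 0 -> forall a, a \in s -> c a = 0.
Proof.
move=> us hs a0 ina0; apply/eqP; apply/negP => /negP nz.
set S := [seq x <- s | c x != 0].
have ex : exists k, has (fun x => phi x == k) S.
  by exists (phi a0); apply/hasP; exists a0; rewrite ?mem_filter ?nz ?ina0.
case: (ex_minnP ex) => k /hasP [x xS /eqP phix] kmin.
move: xS; rewrite mem_filter => /andP [cx xs].
have := congr1 (mcoeff x) hs; rewrite raddf_sum mcoeff0 (bigD1_seq x) //=.
rewrite mcoeffZ coef_particle_fs; last exact: fs_refl.
rewrite big1_seq ?addr0 ?mulr1; first by move/eqP: cx.
move=> y /andP [yx ys].
rewrite mcoeffZ; case: (eqVneq (c y) 0) => [->|cy]; first by rewrite mul0r.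
rewrite coef_particle_nfs ?mulr0 // => fs.
have [_ [E|lt]] := fixed_slide_props fs; first by rewrite E eqxx in yx.
have : (k <= phi y)%N by apply: kmin; apply/hasP; exists y; rewrite ?mem_filter ?cy ?ys.
lia.
Qed.

Definition spanD n D (p : {mpoly int[n]}) := exists c : 'X_{1..n} -> int,
  p = \sum_(a : 'X_{1..n < D}) c (val a) *: particle (val a).

Lemma spanD0 n D : spanD D (0 : {mpoly int[n]}).
Proof. by exists (fun _ => 0); rewrite big1 // => a _; rewrite scale0r. Qed.

Lemma spanDD n D (p q : {mpoly int[n]}) : spanD D p -> spanD D q -> spanD D (p + q).
Proof.
case=> c1 -> [c2 ->]; exists (fun a => c1 a + c2 a).
by rewrite -big_split /=; apply: eq_bigr => a _; rewrite scalerDl.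
Qed.

Lemma spanDZ n D k (p : {mpoly int[n]}) : spanD D p -> spanD D (k *: p).
Proof.
case=> c ->; exists (fun a => k * c a).
by rewrite scaler_sumr; apply: eq_bigr => a _; rewrite scalerA.
Qed.

Lemma spanDB n D (p q : {mpoly int[n]}) : spanD D p -> spanD D q -> spanD D (p - q).
Proof.
move=> hp hq; apply: spanDD => //; rewrite -scaleN1r; exact: spanDZ.
Qed.

Lemma phi_bound n (b : 'X_{1..n}) : (phi b <= mdeg b * n)%N.
Proof.
rewrite mdegE mulnC big_distrr /=; apply: leq_sum => i _.
by rewrite leq_mul2r leq_subr orbT.
Qed.

Lemma spanP n D (m : 'X_{1..n}) : (mdeg m < D)%N -> spanD D (particle m).
Proof.
move=> mD; exists (fun a => ((a == m)%:R : int)).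
rewrite (bigD1 (Sub m mD : 'X_{1..n < D})) //= eqxx scale1r big1 ?addr0 // => b nb.
case: eqP => [E|_]; last by rewrite scale0r.
by exfalso; move/eqP: nb; apply; apply: val_inj; rewrite /= E.
Qed.

Lemma spanX n D : forall k (m : 'X_{1..n}), (mdeg m < D)%N ->
  (D * n - phi m < k)%N -> spanD D 'X_[m].
Proof.
elim=> [//|k IH] m mD mk.
have lt : (mdeg m < (mdeg m).+1)%N by [].
have E : 'X_[m] = particle m - \sum_(b : 'X_{1..n < (mdeg m).+1} | b != Sub m lt)
   (if excluded_middle_informative (fixed_slide m (val b))
      then 'X_[val b] else 0).
  rewrite /particle (bigD1 (Sub m lt)) //=.
  by rewrite ifEM_T ?addrK //; exact: fs_refl.
rewrite E; apply: spanDB; first exact: spanP.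
apply: big_ind => [|x y|b nb]; [exact: spanD0 | exact: spanDD |].
have [f|f] := excluded_middle_informative (fixed_slide m (val b)); last by rewrite ifEM_F //; exact: spanD0.
rewrite ifEM_T //.
have [d [E'|lt']] := fixed_slide_props f.
  by exfalso; move/eqP: nb; apply; apply: val_inj; rewrite /= E'.
have hb := phi_bound (val b).
apply: IH; first by rewrite d.
have : (mdeg (val b) * n <= D * n)%N by rewrite leq_mul2r d ltnW ?orbT.
move=> H; move: lt' hb H mk => /=; lia.
Qed.

Theorem proposition4p6 (n : nat) :
  (forall p : {mpoly int[n]},
     exists (s : seq 'X_{1..n}) (c : 'X_{1..n} -> int),
       p = \sum_(a <- s) c a *: particle a)
  /\
  (forall (s : seq 'X_{1..n}) (c : 'X_{1..n} -> int),
     uniq s -> \sum_(a <- s) c a *: particle a = 0 ->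
     forall a, a \in s -> c a = 0).
Proof.
split; last exact: indep.
move=> p; have : spanD (msize p) p.
  rewrite {2}[p]mpolyE big_seq; apply: big_ind => [|x y|m mm].
  - exact: spanD0.
  - exact: spanDD.
  apply: spanDZ; apply: (@spanX _ _ (msize p * n - phi m).+1) => //.
  exact: msize_mdeg_lt.
case=> c E; exists (map val (index_enum 'X_{1..n < msize p})), c.
by rewrite big_map.
Qed.
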